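(* Consider the two-route traffic model with affine routing ratios described in the context, and assume that $\phi r_\ell^0\le F_\ell$ for $\ell=1,2$. For $\alpha\in(0,1]$ let $\overline{x}(\alpha)$ be the unique equilibrium of the system with penetration rate $\alpha$. Let $i\in\{1,2\}$ and $j=3-i$. Then $\phi R_i(\overline{x}(\alpha))>F_i$ (unsatisfied demand on route $i$ at equilibrium) if and only if $\phi>F_i(1+E_j/E_i)-E_j(1-2r_i^0)$ and $\alpha>\underline{\alpha}_i:=\dfrac{2E_iE_j(F_i-\phi r_i^0)}{\phi\big(E_iE_j(1-2r_i^0)+\phi E_i-F_i(E_i+E_j)\big)}$.
   Context: Two routes $i=1,2$ connect an origin to a destination, with positive parameters $B_i$ (jam density), $C_i$ (critical density), $F_i$ (capacity), $C_i<B_i$, and constant demand $\phi>0$. Set $v_i=F_i/C_i$ and $E_i=v_iB_i$. The state $x=(x_1,x_2)\in\Omega:=[0,B_1]\times[0,B_2]$ evolves by $\dot x_i=\min\{\phi R_i(x),S_i(x_i)\}-D_i(x_i)$, with $S_i(x_i)=F_i$ if $x_i<C_i$, $S_i(x_i)=\frac{F_i}{B_i-C_i}(B_i-x_i)$ otherwise; $D_i(x_i)=v_ix_i$ if $x_i<C_i$, $D_i(x_i)=F_i$ otherwise. The routing ratios are affine: with penetration rate $\alpha\in(0,1]$ and constants $r_1^0,r_2^0\ge0$, $r_1^0+r_2^0=1$, $R_1(x)=(1-\alpha)r_1^0+\alpha\big(\tfrac12+\tfrac12(\tfrac{x_2}{B_2}-\tfrac{x_1}{B_1})\big)$, $R_2(x)=(1-\alpha)r_2^0+\alpha\big(\tfrac12+\tfrac12(\tfrac{x_1}{B_1}-\tfrac{x_2}{B_2})\big)$.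 Standing assumptions: $\phi<F_1+F_2$; $F_i>(1-\alpha)\phi r_i^0$ for $i=1,2$; $\phi<E_i$ for $i=1,2$. Under these assumptions the system has, for each $\alpha$, a unique equilibrium $\overline{x}(\alpha)\in\Omega$. *)

(* Defs.v *)
(* concrete reals R. Routes are indexed by nat; only 1 and 2 are used. *)
From Stdlib Require Import Reals Lra.
Open Scope R_scope.

Definition vel (F C : nat -> R) (i : nat) : R := F i / C i.
Definition Ecap (B C F : nat -> R) (i : nat) : R := vel F C i * B i.

Definition supply (B C F : nat -> R) (i : nat) (xi : R) : R :=
  if Rlt_dec xi (C i) then F i else F i / (B i - C i) * (B i - xi).
Definition demand (C F : nat -> R) (i : nat) (xi : R) : R :=
  if Rlt_dec xi (C i) then vel F C i * xi else F i.

Definition routing (B r0 : nat -> R) (alpha : R) (i : nat) (x : nat -> R) : R :=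
  (1 - alpha) * r0 i
  + alpha * (1/2 + 1/2 * (x (3 - i)%nat / B (3 - i)%nat - x i / B i)).

Definition field (B C F r0 : nat -> R) (phi alpha : R) (i : nat) (x : nat -> R) : R :=
  Rmin (phi * routing B r0 alpha i x) (supply B C F i (x i)) - demand C F i (x i).

Definition is_equilibrium (B C F r0 : nat -> R) (phi alpha : R) (x : nat -> R) : Prop :=
  0 <= x 1%nat <= B 1%nat /\ 0 <= x 2%nat <= B 2%nat /\
  field B C F r0 phi alpha 1 x = 0 /\ field B C F r0 phi alpha 2 x = 0.

Definition alpha_low (B C F r0 : nat -> R) (phi : R) (i : nat) : R :=
  let Ei := Ecap B C F i in
  let Ej := Ecap B C F (3 - i)%nat in
  2 * Ei * Ej * (F i - phi * r0 i)
  / (phi * (Ei * Ej * (1 - 2 * r0 i) + phi * Ei - F i * (Ei + Ej))).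

(* Main.v *)
Require Import Defs.
From Stdlib Require Import Reals Lra Psatz.
Open Scope R_scope.

Lemma sat (B C F : nat -> R) (l : nat) (p xl : R) :
  0 < C l -> C l < B l -> 0 < F l -> 0 <= xl <= B l ->
  Rmin p (supply B C F l xl) - demand C F l xl = 0 ->
  (p >= F l /\ xl / B l * Ecap B C F l = F l) \/
  (p < F l /\ xl / B l * Ecap B C F l = p).
Proof.
  intros HC HCB HF Hx H.
  unfold supply, demand, Ecap, vel in *.
  destruct (Rlt_dec xl (C l)) as [Hlt|Hge].
  - assert (Hv : F l / C l * xl < F l).
    { apply Rlt_le_trans with (F l / C l * C l).
      apply Rmult_lt_compat_l; [apply Rdiv_lt_0_compat|]; lra.
      right; field; lra. }
    unfold Rmin in H; destruct (Rle_dec p (F l)).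
    + right; split; [lra|].
      assert (p = F l / C l * xl) by lra. subst p. field. lra.
    + exfalso; lra.
  - assert (HS : F l / (B l - C l) * (B l - xl) <= F l).
    { apply Rle_trans with (F l / (B l - C l) * (B l - C l)).
      apply Rmult_le_compat_l; [left; apply Rdiv_lt_0_compat|]; lra.
      right; field; lra. }
    assert (Hm1 : Rmin p (F l / (B l - C l) * (B l - xl)) <= p) by apply Rmin_l.
    assert (Hm2 : Rmin p (F l / (B l - C l) * (B l - xl)) <= F l / (B l - C l) * (B l - xl)) by apply Rmin_r.
    assert (HSe : F l / (B l - C l) * (B l - xl) = F l / (B l - C l) * (B l - C l)).
    { assert (F l / (B l - C l) * (B l - C l) = F l) by (field; lra). lra. }
    apply Rmult_eq_reg_l in HSe.
    2:{ apply Rgt_not_eq, Rdiv_lt_0_compat; lra. }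
    assert (xl = C l) by lra. subst xl.
    left; split; [lra|]. field. lra.
Qed.

Lemma caseA (phi alpha ra Fa Ea Eb ya yb Ra : R) :
  Ra = (1-alpha)*ra + alpha*(1/2+1/2*(yb-ya)) ->
  ya*Ea = Fa -> yb*Eb = phi*(1-Ra) ->
  (phi*Ra - Fa)*(2*Ea*Eb+alpha*phi*Ea) =
  alpha*phi*(Ea*Eb*(1-2*ra)+phi*Ea-Fa*(Ea+Eb)) - 2*Ea*Eb*(Fa-phi*ra).
Proof.
  intros HR H1 H2.
  assert (E1 : 2*Ea*Eb*Ra = 2*Ea*Eb*((1-alpha)*ra + alpha/2)
                 + alpha*Ea*(yb*Eb) - alpha*Eb*(ya*Ea)) by (rewrite HR; field).
  rewrite H1, H2 in E1.
  assert (P : phi * (2*Ea*Eb*Ra) = phi * (2*Ea*Eb*((1-alpha)*ra + alpha/2)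
                 + alpha*Ea*(phi*(1-Ra)) - alpha*Eb*Fa)) by (rewrite E1; reflexivity).
  lra.
Qed.

Lemma core (phi alpha ra rb Fa Fb Ea Eb ya yb Ra Rb : R) :
  0 < phi -> 0 < alpha -> 0 < Ea -> 0 < Eb -> ra + rb = 1 ->
  phi*ra <= Fa -> phi < Fa + Fb ->
  Ra = (1-alpha)*ra + alpha*(1/2+1/2*(yb-ya)) ->
  Rb = (1-alpha)*rb + alpha*(1/2+1/2*(ya-yb)) ->
  (phi*Ra >= Fa /\ ya*Ea = Fa \/ phi*Ra < Fa /\ ya*Ea = phi*Ra) ->
  (phi*Rb >= Fb /\ yb*Eb = Fb \/ phi*Rb < Fb /\ yb*Eb = phi*Rb) ->
  phi*Ra > Fa <-> (phi > Fa*(1+Eb/Ea) - Eb*(1-2*ra) /\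
     alpha > 2*Ea*Eb*(Fa-phi*ra)/(phi*(Ea*Eb*(1-2*ra)+phi*Ea - Fa*(Ea+Eb)))).
Proof.
  intros Hp Ha HEa HEb Hr Hd Hc HRa HRb Sa Sb.
  assert (Hsum : Ra + Rb = 1).
  { rewrite HRa, HRb. replace rb with (1-ra) by lra. field. }
  set (K := Ea*Eb*(1-2*ra)+phi*Ea - Fa*(Ea+Eb)).
  set (L := alpha*phi*K - 2*Ea*Eb*(Fa-phi*ra)).
  assert (Step1 : L > 0 <-> (phi > Fa*(1+Eb/Ea) - Eb*(1-2*ra) /\
     alpha > 2*Ea*Eb*(Fa-phi*ra)/(phi*K))).
  { assert (Id1 : phi - (Fa*(1+Eb/Ea) - Eb*(1-2*ra)) = K / Ea) by (unfold K; field; lra).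
    split.
    - intro HL.
      assert (HK : K > 0).
      { destruct (Rle_dec K 0) as [Hk|Hk]; [|lra].
        exfalso. assert (alpha*phi*K <= 0).
        { assert (0 < alpha*phi) by (apply Rmult_lt_0_compat; lra).
          assert (alpha*phi*K <= alpha*phi*0) by (apply Rmult_le_compat_l; lra). lra. }
        assert (0 <= 2*Ea*Eb*(Fa-phi*ra)).
        { apply Rmult_le_pos; [|lra]. assert (0 < Ea*Eb) by (apply Rmult_lt_0_compat; lra). lra. }
        unfold L in HL. lra. }
      split.
      + assert (K/Ea > 0) by (apply Rdiv_lt_0_compat; lra). lra.
      + assert (HpK : 0 < phi*K) by (apply Rmult_lt_0_compat; lra).
        assert (Id2 : alpha - 2*Ea*Eb*(Fa-phi*ra)/(phi*K) = L/(phi*K)) by (unfold L; field; lra).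
        assert (L/(phi*K) > 0) by (apply Rdiv_lt_0_compat; lra). lra.
    - intros [H1 H2].
      assert (HK : K > 0).
      { assert (K = (K/Ea)*Ea) by (field; lra).
        assert (0 < (K/Ea)*Ea) by (apply Rmult_lt_0_compat; lra). lra. }
      assert (HpK : 0 < phi*K) by (apply Rmult_lt_0_compat; lra).
      assert (Id2 : alpha - 2*Ea*Eb*(Fa-phi*ra)/(phi*K) = L/(phi*K)) by (unfold L; field; lra).
      assert (L = (L/(phi*K))*(phi*K)) by (field; lra).
      assert (0 < (L/(phi*K))*(phi*K)) by (apply Rmult_lt_0_compat; lra). lra. }
  assert (Hps : phi*Ra + phi*Rb = phi) by (rewrite <- Rmult_plus_distr_l, Hsum; ring).
  fold K. rewrite <- Step1.
  destruct Sa as [[Sa1 Sa2]|[Sa1 Sa2]].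
  -
    destruct Sb as [[Sb1 Sb2]|[Sb1 Sb2]]; [exfalso; lra|].
    assert (Hyb : yb*Eb = phi*(1-Ra)) by (rewrite Sb2; f_equal; lra).
    pose proof (caseA phi alpha ra Fa Ea Eb ya yb Ra HRa Sa2 Hyb) as Id.
    fold K in Id. fold L in Id.
    assert (Hpos : 0 < 2*Ea*Eb+alpha*phi*Ea).
    { assert (0 < Ea*Eb) by (apply Rmult_lt_0_compat; lra).
      assert (0 < alpha*phi*Ea) by (repeat apply Rmult_lt_0_compat; lra). lra. }
    split; intro H.
    + rewrite <- Id. apply Rmult_lt_0_compat; lra.
    + destruct (Rle_dec (phi*Ra) Fa) as [h|h]; [|lra].
      assert ((phi*Ra - Fa)*(2*Ea*Eb+alpha*phi*Ea) <= 0).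
      { assert ((phi*Ra - Fa)*(2*Ea*Eb+alpha*phi*Ea) <= 0*(2*Ea*Eb+alpha*phi*Ea))
          by (apply Rmult_le_compat_r; lra). lra. }
      lra.
  - split; intro H; [lra|exfalso].
    assert (HEE : 0 < Ea*Eb) by (apply Rmult_lt_0_compat; lra).
    destruct Sb as [[Sb1 Sb2]|[Sb1 Sb2]].
    + assert (Hrb : Rb = (1-alpha)*rb + alpha*(1/2+1/2*(ya-yb))) by exact HRb.
      assert (Hya : ya*Ea = phi*(1-Rb)) by (rewrite Sa2; f_equal; lra).
      pose proof (caseA phi alpha rb Fb Eb Ea yb ya Rb HRb Sb2 Hya) as Id.
      assert (Hpos : 0 < 2*Eb*Ea+alpha*phi*Eb).
      { assert (0 < alpha*phi*Eb) by (repeat apply Rmult_lt_0_compat; lra). lra. }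
      assert (Lb : 0 <= (phi*Rb - Fb)*(2*Eb*Ea+alpha*phi*Eb)) by (apply Rmult_le_pos; lra).
      assert (Hsumid : L + (alpha*phi*(Eb*Ea*(1-2*rb)+phi*Eb-Fb*(Eb+Ea)) - 2*Eb*Ea*(Fb-phi*rb))
               = (phi - Fa - Fb)*(2*Ea*Eb + alpha*phi*Ea + alpha*phi*Eb)).
      { unfold L, K. replace rb with (1-ra) by lra. field. }
      assert (Hpos2 : 0 < 2*Ea*Eb + alpha*phi*Ea + alpha*phi*Eb).
      { assert (0 < alpha*phi*Ea) by (repeat apply Rmult_lt_0_compat; lra). lra. }
      assert ((phi - Fa - Fb)*(2*Ea*Eb + alpha*phi*Ea + alpha*phi*Eb) < 0).
      { assert ((phi - Fa - Fb)*(2*Ea*Eb + alpha*phi*Ea + alpha*phi*Eb) <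
                0*(2*Ea*Eb + alpha*phi*Ea + alpha*phi*Eb)) by (apply Rmult_lt_compat_r; lra). lra. }
      lra.
    + assert (Hyb : yb*Eb = phi*(1-Ra)) by (rewrite Sb2; f_equal; lra).
      assert (E1 : 2*Ea*Eb*Ra = 2*Ea*Eb*((1-alpha)*ra + alpha/2)
                 + alpha*Ea*(yb*Eb) - alpha*Eb*(ya*Ea)) by (rewrite HRa; field).
      rewrite Hyb, Sa2 in E1.
      assert (P : phi * (2*Ea*Eb*Ra) = phi * (2*Ea*Eb*((1-alpha)*ra + alpha/2)
                 + alpha*Ea*(phi*(1-Ra)) - alpha*Eb*(phi*Ra))) by (rewrite E1; reflexivity).
      assert (Id : L = (phi*Ra - Fa)*(2*Ea*Eb + alpha*phi*Ea + alpha*phi*Eb)) by (unfold L, K; lra).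
      assert (Hpos2 : 0 < 2*Ea*Eb + alpha*phi*Ea + alpha*phi*Eb).
      { assert (0 < alpha*phi*Ea) by (repeat apply Rmult_lt_0_compat; lra).
        assert (0 < alpha*phi*Eb) by (repeat apply Rmult_lt_0_compat; lra). lra. }
      assert ((phi*Ra - Fa)*(2*Ea*Eb + alpha*phi*Ea + alpha*phi*Eb) <
                0*(2*Ea*Eb + alpha*phi*Ea + alpha*phi*Eb)) by (apply Rmult_lt_compat_r; lra).
      lra.
Qed.

Theorem proposition3
  (B C F r0 : nat -> R) (phi alpha : R)
  (HB : forall l, (l = 1 \/ l = 2)%nat -> 0 < B l)
  (HC : forall l, (l = 1 \/ l = 2)%nat -> 0 < C l)
  (HF : forall l, (l = 1 \/ l = 2)%nat -> 0 < F l)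
  (HCB : forall l, (l = 1 \/ l = 2)%nat -> C l < B l)
  (Hphi : 0 < phi)
  (Hr0 : forall l, (l = 1 \/ l = 2)%nat -> 0 <= r0 l)
  (Hr0sum : r0 1%nat + r0 2%nat = 1)
  (Halpha : 0 < alpha <= 1)
  (Hcap : phi < F 1%nat + F 2%nat)
  (Hpart : forall l, (l = 1 \/ l = 2)%nat -> F l > (1 - alpha) * phi * r0 l)
  (HE : forall l, (l = 1 \/ l = 2)%nat -> phi < Ecap B C F l)
  (Hdem : forall l, (l = 1 \/ l = 2)%nat -> phi * r0 l <= F l)
  (i : nat) (Hi : (i = 1 \/ i = 2)%nat)
  (x : nat -> R) (Hx : is_equilibrium B C F r0 phi alpha x) :
  let j := (3 - i)%nat in
  phi * routing B r0 alpha i x > F i <->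
  (phi > F i * (1 + Ecap B C F j / Ecap B C F i) - Ecap B C F j * (1 - 2 * r0 i)
   /\ alpha > alpha_low B C F r0 phi i).
Proof.
  destruct Hx as [Hx1 [Hx2 [Hf1 Hf2]]].
  unfold field in Hf1, Hf2.
  assert (O1 : (1 = 1 \/ 1 = 2)%nat) by auto.
  assert (O2 : (2 = 1 \/ 2 = 2)%nat) by auto.
  pose proof (sat B C F 1 _ _ (HC 1%nat O1) (HCB 1%nat O1) (HF 1%nat O1) Hx1 Hf1) as S1.
  pose proof (sat B C F 2 _ _ (HC 2%nat O2) (HCB 2%nat O2) (HF 2%nat O2) Hx2 Hf2) as S2.
  assert (E1 : 0 < Ecap B C F 1) by (pose proof (HE 1%nat O1); lra).
  assert (E2 : 0 < Ecap B C F 2) by (pose proof (HE 2%nat O2); lra).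
  intro j; unfold j, alpha_low.
  destruct Hi; subst i; cbn [Nat.sub].
  - apply (core phi alpha (r0 1%nat) (r0 2%nat) (F 1%nat) (F 2%nat) _ _
             (x 1%nat / B 1%nat) (x 2%nat / B 2%nat) _ (routing B r0 alpha 2 x));
      try lra; auto.
    all: reflexivity.
  - apply (core phi alpha (r0 2%nat) (r0 1%nat) (F 2%nat) (F 1%nat) _ _
             (x 2%nat / B 2%nat) (x 1%nat / B 1%nat) _ (routing B r0 alpha 1 x));
      try lra; auto.
    all: reflexivity.
Qed.
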